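(* Let $\Lambda$ be the $K3^{[n]}$-lattice ($n\ge2$), $\alpha\in\Lambda$ primitive isotropic, $Q_\alpha:=\alpha^\perp/\mathbb{Z}\alpha$, and let $Q_\alpha$ act on $\Omega_{\alpha^\perp}$ by $[z]\cdot\mathbb{C}x:=\mathbb{C}(x+(x,z)\alpha)$ for $x\in\alpha^\perp\otimes\mathbb{C}$ (denote the image group of this action by $g(Q_\alpha)$). For $\underline{\ell}\in\Omega_{Q_\alpha}$: (1) $g(Q_\alpha)$ has a dense orbit in the fiber $q^{-1}(\underline{\ell})$ if and only if $\underline{\ell}$ is non-special; (2) if $g(Q_\alpha)$ has a dense orbit in $q^{-1}(\underline{\ell})$, then every $g(Q_\alpha)$-orbit in $q^{-1}(\underline{\ell})$ is dense.
   Context: $\Omega_{\alpha^\perp}:=\{\ell\in\mathbb{P}(\Lambda\otimes\mathbb{C}):(\ell,\ell)=0,(\ell,\bar\ell)>0,(\ell,\alpha)=0\}$, $\Omega_{Q_\alpha}:=\{\ell\in\mathbb{P}(Q_\alpha\otimes\mathbb{C}):(\ell,\ell)=0,(\ell,\bar\ell)>0\}$, and $q:\Omega_{\alpha^\perp}\to\Omega_{Q_\alpha}$ sends a line to its image modulo $\mathbb{C}\alpha$; the fiber over $\underline{\ell}$ is $\mathbb{P}(\mathbb{C}\alpha+\mathbb{C}t)\setminus\{[\alpha]\}$ for any lift $t$. A period $\underline{\ell}\in\Omega_{Q_\alpha}$ is special if $(\underline{\ell}\oplus\bar{\underline{\ell}})\cap Q_\alpha\neq0$ (equivalently, the corresponding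 $K3$ period in $\Lambda_{k3}\cong$ $K3$ lattice, via $Q_\alpha\cong\bar v^\perp\subset\Lambda_{k3}$, is special), and non-special otherwise. The action is well defined in $Q_\alpha$ since $(x,\alpha)=0$. *)

(* Defs.v *)
From HB Require Import structures.
From mathcomp Require Import all_boot all_order all_algebra.
From mathcomp Require Import reals.
From mathcomp Require Export complex.
Set Implicit Arguments. Unset Strict Implicit. Unset Printing Implicit Defensive.
Import Order.TTheory GRing.Theory Num.Theory.
Local Open Scope ring_scope.

(* The K3^[n] lattice  Lambda = U^3 (+) E8(-1)^2 (+) <2-2n>,  realised as     *)
(* Z^23 (row vectors 'rV[int]_23) with the following Gram matrix.            *)
(* Coordinates: 0..5 the three hyperbolic planes U, 6..13 and 14..21 the two *)
(* copies of E8(-1), 22 the generator of <2-2n>.                             *)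

(* Cartan matrix of E8: chain 0-1-2-3-4-5-6 and node 7 attached to node 4   *)
Definition e8_adj (i j : nat) : bool :=
  [|| (j == i.+1) && (j < 7) , (i == j.+1) && (i < 7) , ((i == 4) && (j == 7)) | ((i == 7) && (j == 4))]%N.

Definition e8_cartan (i j : nat) : int :=
  if i == j then 2 else if e8_adj i j then -1 else 0.

Definition k3n_gram_nat (n i j : nat) : int :=
  if (i < 6)%N then
    (if (j < 6)%N then (if (i./2 == j./2) && (i != j) then 1 else 0) else 0)
  else if (i < 22)%N then
    (if (6 <= j < 22)%N && ((i - 6) %/ 8 == (j - 6) %/ 8)%N
     then - e8_cartan ((i - 6) %% 8) ((j - 6) %% 8) else 0)
  else (if j == 22 then 2%:Z - 2%:Z * n%:Z else 0).

Definition k3n_gram (n : nat) : 'M[int]_23 :=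
  \matrix_(i < 23, j < 23) k3n_gram_nat n i j.

Notation Lam := 'rV[int]_23.

Definition bil (n : nat) (x y : Lam) : int := (x *m k3n_gram n *m y^T) 0 0.

Definition primitive (a : Lam) : Prop :=
  a != 0 /\ forall (k : int) (b : Lam), a = k *: b -> `|k| = 1.

Section Complexified.
Variable R : realType.
Local Notation C := R[i].

Definition toC (x : Lam) : 'rV[C]_23 := map_mx (fun k : int => k%:~R) x.
Definition bilC (n : nat) (x y : 'rV[C]_23) : C :=
  (x *m map_mx (fun k : int => k%:~R) (k3n_gram n) *m y^T) 0 0.
Definition conjv (x : 'rV[C]_23) : 'rV[C]_23 := map_mx (@conjc R) x.

(* A point of P(Lambda (x) C) is represented by a nonzero vector; all the    *)
(* predicates below are invariant under nonzero rescaling.                  *)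

Definition in_Omega_perp (n : nat) (a : Lam) (x : 'rV[C]_23) : Prop :=
  [/\ x != 0, bilC n x x = 0, 0 < bilC n x (conjv x) & bilC n x (toC a) = 0].

(* t in alpha^perp (x) C is a lift of a period  l_ = [t mod C alpha]  in      *)
(* Omega_{Q_alpha}: the conditions (t,t) = 0 and (t, tbar) > 0 are those of  *)
(* the induced form on Q_alpha (x) C, and they force t notin C alpha.         *)
Definition Q_period_lift (n : nat) (a : Lam) (t : 'rV[C]_23) : Prop :=
  [/\ bilC n t (toC a) = 0, bilC n t t = 0 & 0 < bilC n t (conjv t)].

(* The period l_ (with lift t) is special iff (l_ (+) l_bar) meets Q_alpha   *)
(* nontrivially: some v in alpha^perp, whose class in Q_alpha is nonzero      *)
(* (v notin Z alpha), has image in Q_alpha (x) C lying in C t + C tbar       *)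
(* modulo C alpha.                                                          *)
Definition special (n : nat) (a : Lam) (t : 'rV[C]_23) : Prop :=
  exists (v : Lam) (u w c : C),
    [/\ bil n v a = 0, (forall k : int, v != k *: a) &
        toC v = u *: t + w *: conjv t + c *: toC a].

(* The fiber q^{-1}(l_) = P(C alpha + C t) \ {[alpha]}. *)
Definition in_fiber (a : Lam) (t x : 'rV[C]_23) : Prop :=
  exists u c : C, u != 0 /\ x = u *: t + c *: toC a.

Definition gact (n : nat) (a z : Lam) (x : 'rV[C]_23) : 'rV[C]_23 :=
  x + bilC n x (toC z) *: toC a.

(* The orbit of the point [x] under g(Q_alpha) is dense in the fiber         *)
(* q^{-1}(l_), for the (quotient = classical) topology of P^22(C): every     *)
(* point [y] of the fiber, with any representative y, and every eps > 0,     *)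
(* there is an orbit point [g_z x] with a representative lam * g_z x within  *)
(* eps of y (coordinatewise).  Since C^23 \ 0 -> P^22 is open, the images of *)
(* such balls form a neighbourhood basis of [y].                            *)
Definition orbit_dense_in_fiber (n : nat) (a : Lam) (t x : 'rV[C]_23) : Prop :=
  forall y : 'rV[C]_23, in_fiber a t y ->
  forall eps : C, 0 < eps ->
  exists (z : Lam) (lam : C),
    bil n z a = 0 /\ lam != 0 /\
    forall i : 'I_23, `| (lam *: gact n a z x) 0 i - y 0 i | < eps.

End Complexified.

(* Main.v *)
Require Import Defs.
From HB Require Import structures.
From mathcomp Require Import all_boot all_order all_algebra.
From mathcomp Require Import boolp classical_sets reals complex ring lra zify.
Import Order.TTheory GRing.Theory Num.Theory.
Local Open Scope ring_scope.

Definition tab : seq (seq int) := [:: [:: 0; 1; 0; 0; 0; 0; 0; 0; 0; 0; 0; 0; 0; 0; 0; 0; 0; 0; 0; 0; 0; 0];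
 [:: 1; 0; 0; 0; 0; 0; 0; 0; 0; 0; 0; 0; 0; 0; 0; 0; 0; 0; 0; 0; 0; 0];
 [:: 0; 0; 0; 1; 0; 0; 0; 0; 0; 0; 0; 0; 0; 0; 0; 0; 0; 0; 0; 0; 0; 0];
 [:: 0; 0; 1; 0; 0; 0; 0; 0; 0; 0; 0; 0; 0; 0; 0; 0; 0; 0; 0; 0; 0; 0];
 [:: 0; 0; 0; 0; 0; 1; 0; 0; 0; 0; 0; 0; 0; 0; 0; 0; 0; 0; 0; 0; 0; 0];
 [:: 0; 0; 0; 0; 1; 0; 0; 0; 0; 0; 0; 0; 0; 0; 0; 0; 0; 0; 0; 0; 0; 0];
 [:: 0; 0; 0; 0; 0; 0; Negz 1; 1; 0; 0; 0; 0; 0; 0; 0; 0; 0; 0; 0; 0; 0; 0];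
 [:: 0; 0; 0; 0; 0; 0; 1; Negz 1; 1; 0; 0; 0; 0; 0; 0; 0; 0; 0; 0; 0; 0; 0];
 [:: 0; 0; 0; 0; 0; 0; 0; 1; Negz 1; 1; 0; 0; 0; 0; 0; 0; 0; 0; 0; 0; 0; 0];
 [:: 0; 0; 0; 0; 0; 0; 0; 0; 1; Negz 1; 1; 0; 0; 0; 0; 0; 0; 0; 0; 0; 0; 0];
 [:: 0; 0; 0; 0; 0; 0; 0; 0; 0; 1; Negz 1; 1; 0; 1; 0; 0; 0; 0; 0; 0; 0; 0];
 [:: 0; 0; 0; 0; 0; 0; 0; 0; 0; 0; 1; Negz 1; 1; 0; 0; 0; 0; 0; 0; 0; 0; 0];
 [:: 0; 0; 0; 0; 0; 0; 0; 0; 0; 0; 0; 1; Negz 1; 0; 0; 0; 0; 0; 0; 0; 0; 0];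
 [:: 0; 0; 0; 0; 0; 0; 0; 0; 0; 0; 1; 0; 0; Negz 1; 0; 0; 0; 0; 0; 0; 0; 0];
 [:: 0; 0; 0; 0; 0; 0; 0; 0; 0; 0; 0; 0; 0; 0; Negz 1; 1; 0; 0; 0; 0; 0; 0];
 [:: 0; 0; 0; 0; 0; 0; 0; 0; 0; 0; 0; 0; 0; 0; 1; Negz 1; 1; 0; 0; 0; 0; 0];
 [:: 0; 0; 0; 0; 0; 0; 0; 0; 0; 0; 0; 0; 0; 0; 0; 1; Negz 1; 1; 0; 0; 0; 0];
 [:: 0; 0; 0; 0; 0; 0; 0; 0; 0; 0; 0; 0; 0; 0; 0; 0; 1; Negz 1; 1; 0; 0; 0];
 [:: 0; 0; 0; 0; 0; 0; 0; 0; 0; 0; 0; 0; 0; 0; 0; 0; 0; 1; Negz 1; 1; 0; 1];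
 [:: 0; 0; 0; 0; 0; 0; 0; 0; 0; 0; 0; 0; 0; 0; 0; 0; 0; 0; 1; Negz 1; 1; 0];
 [:: 0; 0; 0; 0; 0; 0; 0; 0; 0; 0; 0; 0; 0; 0; 0; 0; 0; 0; 0; 1; Negz 1; 0];
 [:: 0; 0; 0; 0; 0; 0; 0; 0; 0; 0; 0; 0; 0; 0; 0; 0; 0; 0; 1; 0; 0; Negz 1]].
Lemma tab_ok : all (fun i => all (fun j => k3n_gram_nat 0 i j == nth 0 (nth [::] tab i) j) (iota 0 22)) (iota 0 22).
Proof. vm_compute. reflexivity. Qed.
Lemma col22_ok : all (fun i => k3n_gram_nat 0 i 22 == 0) (iota 0 22).
Proof. vm_compute. reflexivity. Qed.
Lemma sym_ok : all (fun i => all (fun j => k3n_gram_nat 0 i j == k3n_gram_nat 0 j i) (iota 0 22)) (iota 0 22).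
Proof. vm_compute. reflexivity. Qed.

Lemma gram_n0 n k j : (k < 22)%N -> k3n_gram_nat n k j = k3n_gram_nat 0 k j.
Proof. by move=> hk; rewrite /k3n_gram_nat hk; case: ifP => // /negbT; rewrite ltnNge ltnW. Qed.
Lemma gram_tab n k j : (k < 22)%N -> (j < 22)%N -> k3n_gram_nat n k j = nth 0 (nth [::] tab k) j.
Proof.
move=> hk hj; rewrite gram_n0 //; apply/eqP.
have := tab_ok; move/allP/(_ k); rewrite mem_iota hk => /(_ isT) /allP /(_ j); rewrite mem_iota hj; exact.
Qed.
Lemma gram_last n j : (j < 22)%N -> k3n_gram_nat n 22 j = 0.
Proof. by move=> hj; rewrite /k3n_gram_nat /=; case: eqP => // ej; rewrite ej in hj. Qed.
Lemma gram_col22 n k : (k < 22)%N -> k3n_gram_nat n k 22 = 0.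
Proof.
move=> hk; rewrite gram_n0 //; apply/eqP.
by have := col22_ok; move/allP/(_ k); rewrite mem_iota hk => /(_ isT).
Qed.
Lemma gram_2222 n : k3n_gram_nat n 22 22 = 2%:Z - 2%:Z * n%:Z.
Proof. by []. Qed.

Lemma gram_sym n : (k3n_gram n)^T = k3n_gram n.
Proof.
apply/matrixP => i j; rewrite !mxE.
have [hi|] := ltnP i 22; have [hj|] := ltnP j 22.
- rewrite !gram_n0 //; apply/eqP.
  have := sym_ok; move/allP/(_ j); rewrite mem_iota hj => /(_ isT) /allP /(_ i); rewrite mem_iota hi; exact.
- move=> hj; have -> : nat_of_ord j = 22%N by apply/eqP; rewrite eqn_leq hj -ltnS ltn_ord.
  by rewrite gram_last // gram_col22.
- move=> hi; have -> : nat_of_ord i = 22%N by apply/eqP; rewrite eqn_leq hi -ltnS ltn_ord.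
  by rewrite gram_last // gram_col22.
- move=> hj hi.
  have -> : nat_of_ord j = 22%N by apply/eqP; rewrite eqn_leq hj -ltnS ltn_ord.
  by have -> : nat_of_ord i = 22%N by apply/eqP; rewrite eqn_leq hi -ltnS ltn_ord.
Qed.

Section Inj.
Variable F : realFieldType.
Variable n : nat.
Hypothesis hn : (2 <= n)%N.
Definition GF : 'M[F]_23 := map_mx (fun k : int => k%:~R) (k3n_gram n).
Lemma eqj (x : 'rV[F]_23) (j : nat) : (j < 23)%N -> (x *m GF) 0 (inord j) =
   \sum_(0 <= k < 23) x 0 (inord k) * (k3n_gram_nat n k j)%:~R.
Proof.
move=> hj; rewrite mxE big_mkord; apply: eq_bigr => i _; rewrite !mxE inord_val /= inordK //.
Qed.
Lemma Ej (x : 'rV[F]_23) j : x *m GF = 0 -> (j < 22)%N ->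
  \sum_(0 <= k < 22) x 0 (inord k) * (nth 0 (nth [::] tab k) j)%:~R = 0.
Proof.
move=> h hj; have := @eqj x j (leqW hj); rewrite h mxE => /esym.
rewrite big_nat_recr //= gram_last // mulr0 addr0 => E; rewrite -[RHS]E.
by apply: eq_big_nat => k /andP[_ hk]; rewrite gram_tab.
Qed.
Lemma GF_inj (x : 'rV[F]_23) : x *m GF = 0 -> x = 0.
Proof.
move=> h.
have e0 := @Ej x 0 h isT; rewrite !big_nat_recl // big_geq //= ?(mulr0z, mulr1z, mulr0, addr0, add0r, mulr1) ?NegzE ?intrN in e0.
have e1 := @Ej x 1 h isT; rewrite !big_nat_recl // big_geq //= ?(mulr0z, mulr1z, mulr0, addr0, add0r, mulr1) ?NegzE ?intrN in e1.
have e2 := @Ej x 2 h isT; rewrite !big_nat_recl // big_geq //= ?(mulr0z, mulr1z, mulr0, addr0, add0r, mulr1) ?NegzE ?intrN in e2.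
have e3 := @Ej x 3 h isT; rewrite !big_nat_recl // big_geq //= ?(mulr0z, mulr1z, mulr0, addr0, add0r, mulr1) ?NegzE ?intrN in e3.
have e4 := @Ej x 4 h isT; rewrite !big_nat_recl // big_geq //= ?(mulr0z, mulr1z, mulr0, addr0, add0r, mulr1) ?NegzE ?intrN in e4.
have e5 := @Ej x 5 h isT; rewrite !big_nat_recl // big_geq //= ?(mulr0z, mulr1z, mulr0, addr0, add0r, mulr1) ?NegzE ?intrN in e5.
have H0 : x 0 (inord 0) = 0 by lra.
have H1 : x 0 (inord 1) = 0 by lra.
have H2 : x 0 (inord 2) = 0 by lra.
have H3 : x 0 (inord 3) = 0 by lra.
have H4 : x 0 (inord 4) = 0 by lra.
have H5 : x 0 (inord 5) = 0 by lra.
clear e0 e1 e2 e3 e4 e5.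
have e6 := @Ej x 6 h isT; rewrite !big_nat_recl // big_geq //= ?(mulr0z, mulr1z, mulr0, addr0, add0r, mulr1) ?NegzE ?intrN in e6.
have e7 := @Ej x 7 h isT; rewrite !big_nat_recl // big_geq //= ?(mulr0z, mulr1z, mulr0, addr0, add0r, mulr1) ?NegzE ?intrN in e7.
have e8 := @Ej x 8 h isT; rewrite !big_nat_recl // big_geq //= ?(mulr0z, mulr1z, mulr0, addr0, add0r, mulr1) ?NegzE ?intrN in e8.
have e9 := @Ej x 9 h isT; rewrite !big_nat_recl // big_geq //= ?(mulr0z, mulr1z, mulr0, addr0, add0r, mulr1) ?NegzE ?intrN in e9.
have e10 := @Ej x 10 h isT; rewrite !big_nat_recl // big_geq //= ?(mulr0z, mulr1z, mulr0, addr0, add0r, mulr1) ?NegzE ?intrN in e10.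
have e11 := @Ej x 11 h isT; rewrite !big_nat_recl // big_geq //= ?(mulr0z, mulr1z, mulr0, addr0, add0r, mulr1) ?NegzE ?intrN in e11.
have e12 := @Ej x 12 h isT; rewrite !big_nat_recl // big_geq //= ?(mulr0z, mulr1z, mulr0, addr0, add0r, mulr1) ?NegzE ?intrN in e12.
have e13 := @Ej x 13 h isT; rewrite !big_nat_recl // big_geq //= ?(mulr0z, mulr1z, mulr0, addr0, add0r, mulr1) ?NegzE ?intrN in e13.
have H6 : x 0 (inord 6) = 0 by lra.
have H7 : x 0 (inord 7) = 0 by lra.
have H8 : x 0 (inord 8) = 0 by lra.
have H9 : x 0 (inord 9) = 0 by lra.
have H10 : x 0 (inord 10) = 0 by lra.
have H11 : x 0 (inord 11) = 0 by lra.
have H12 : x 0 (inord 12) = 0 by lra.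
have H13 : x 0 (inord 13) = 0 by lra.
clear e6 e7 e8 e9 e10 e11 e12 e13.
have e14 := @Ej x 14 h isT; rewrite !big_nat_recl // big_geq //= ?(mulr0z, mulr1z, mulr0, addr0, add0r, mulr1) ?NegzE ?intrN in e14.
have e15 := @Ej x 15 h isT; rewrite !big_nat_recl // big_geq //= ?(mulr0z, mulr1z, mulr0, addr0, add0r, mulr1) ?NegzE ?intrN in e15.
have e16 := @Ej x 16 h isT; rewrite !big_nat_recl // big_geq //= ?(mulr0z, mulr1z, mulr0, addr0, add0r, mulr1) ?NegzE ?intrN in e16.
have e17 := @Ej x 17 h isT; rewrite !big_nat_recl // big_geq //= ?(mulr0z, mulr1z, mulr0, addr0, add0r, mulr1) ?NegzE ?intrN in e17.
have e18 := @Ej x 18 h isT; rewrite !big_nat_recl // big_geq //= ?(mulr0z, mulr1z, mulr0, addr0, add0r, mulr1) ?NegzE ?intrN in e18.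
have e19 := @Ej x 19 h isT; rewrite !big_nat_recl // big_geq //= ?(mulr0z, mulr1z, mulr0, addr0, add0r, mulr1) ?NegzE ?intrN in e19.
have e20 := @Ej x 20 h isT; rewrite !big_nat_recl // big_geq //= ?(mulr0z, mulr1z, mulr0, addr0, add0r, mulr1) ?NegzE ?intrN in e20.
have e21 := @Ej x 21 h isT; rewrite !big_nat_recl // big_geq //= ?(mulr0z, mulr1z, mulr0, addr0, add0r, mulr1) ?NegzE ?intrN in e21.
have H14 : x 0 (inord 14) = 0 by lra.
have H15 : x 0 (inord 15) = 0 by lra.
have H16 : x 0 (inord 16) = 0 by lra.
have H17 : x 0 (inord 17) = 0 by lra.
have H18 : x 0 (inord 18) = 0 by lra.
have H19 : x 0 (inord 19) = 0 by lra.
have H20 : x 0 (inord 20) = 0 by lra.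
have H21 : x 0 (inord 21) = 0 by lra.
clear e14 e15 e16 e17 e18 e19 e20 e21.
have H22 : x 0 (inord 22) = 0.
  have := @eqj x 22 isT; rewrite h mxE big_nat_recr //= big1_seq ?add0r; last first.
    by move=> k; rewrite mem_index_iota => /andP[_ hk]; rewrite gram_col22 // mulr0.
  move/esym/eqP; rewrite gram_2222 mulf_eq0 => /orP[/eqP //|].
  rewrite intr_eq0 => /eqP e; exfalso; lia.
apply/rowP => i; rewrite mxE.
rewrite -(inord_val i); move: (nat_of_ord i) (ltn_ord i) => k hk.
do 23! (case: k hk => [|k] hk; first done).
by rewrite !ltnS in hk.
Qed.

Lemma GF_det : (\det (k3n_gram n))%:~R != 0 :> F.
Proof.
have hk : kermx GF == 0.
  apply/eqP/row_matrixP => i; rewrite row0; apply: GF_inj.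
  by rewrite -row_mul mulmx_ker row0.
rewrite kermx_eq0 row_free_unit unitmxE unitfE in hk.
by move: hk; rewrite /GF det_map_mx.
Qed.
End Inj.

Lemma det_gram_neq0 n : (2 <= n)%N -> \det (k3n_gram n) != 0.
Proof. by move=> hn; have := @GF_det rat n hn; rewrite intr_eq0. Qed.


Local Open Scope complex_scope.
Local Notation Re := complex.Re.
Local Notation Im := complex.Im.

Section CHelp.
Variable R : realType.
Local Notation C := R[i].
Implicit Types (z w : C) (r : R).

Definition N z : R := Num.sqrt (Re z ^+ 2 + Im z ^+ 2).
Arguments N : clear implicits.

Lemma normE z : `|z| = (N z)%:C.
Proof. by rewrite normc_def. Qed.

Lemma N_ge0 z : 0 <= N z.
Proof. exact: sqrtr_ge0. Qed.

Lemma NM z w : N (z * w) = N z * N w.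
Proof. by apply: complexI; move: (normrM z w); rewrite !normE -rmorphM. Qed.

Lemma ND z w : N (z + w) <= N z + N w.
Proof. by rewrite -lecR; move: (ler_normD z w); rewrite !normE -rmorphD. Qed.

Lemma NN z : N (- z) = N z.
Proof. by apply: complexI; move: (normrN z); rewrite !normE. Qed.

Lemma NB z w : N (z - w) = N (w - z).
Proof. by rewrite -NN opprB. Qed.

Lemma N_eq0 z : (N z == 0) = (z == 0).
Proof. by rewrite -(inj_eq (@complexI R)) -normE normr_eq0. Qed.

Lemma N_real r : N r%:C = `|r|.
Proof. by rewrite /N /= expr0n /= addr0 sqrtr_sqr. Qed.

Lemma Ni : N 'i%C = 1.
Proof. by rewrite /N /= expr0n /= add0r expr1n sqrtr1. Qed.

Lemma N_le z : N z <= `|Re z| + `|Im z|.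
Proof.
rewrite {1}[z]complexE; apply: le_trans (ND _ _) _.
by rewrite NM Ni mul1r !N_real.
Qed.

Lemma ReD z w : Re (z + w) = Re z + Re w. Proof. by case: z; case: w. Qed.
Lemma ImD z w : Im (z + w) = Im z + Im w. Proof. by case: z; case: w. Qed.
Lemma ReB z w : Re (z - w) = Re z - Re w. Proof. by case: z; case: w. Qed.
Lemma ImB z w : Im (z - w) = Im z - Im w. Proof. by case: z; case: w. Qed.
Lemma Re_rmul r z : Re (r%:C * z) = r * Re z.
Proof. by case: z => a b /=; rewrite !mul0r subr0. Qed.
Lemma Im_rmul r z : Im (r%:C * z) = r * Im z.
Proof. by case: z => a b /=; rewrite !mul0r addr0. Qed.
Lemma intC (k : int) : (k%:~R : C) = (k%:~R : R)%:C.
Proof. by rewrite (rmorph_int (real_complex R)). Qed.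
Lemma Im_zmul (k : int) z : Im (k%:~R * z) = k%:~R * Im z.
Proof. by rewrite intC Im_rmul. Qed.
Lemma Re_int (k : int) : Re (k%:~R : C) = k%:~R.
Proof. by rewrite intC. Qed.
Lemma Im_int (k : int) : Im (k%:~R : C) = 0.
Proof. by rewrite intC. Qed.
Lemma Im_conj_self z : Im (z^*%C * z) = 0.
Proof. case: z => a b /=; ring. Qed.
Lemma Im_real r : Im r%:C = 0. Proof. by []. Qed.
Lemma Re_real r : Re r%:C = r. Proof. by []. Qed.

Lemma N_gt0 z : z != 0 -> 0 < N z.
Proof. by move=> nz; rewrite lt_def N_eq0 nz N_ge0. Qed.

Lemma divC_N s z : s / z = ((N z ^+ 2)^-1)%:C * (z^*%C * s).
Proof. by rewrite invc_norm normE -rmorphXn -fmorphV; ring. Qed.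

Lemma Im_div s z : Im (s / z) = Im (z^*%C * s) / N z ^+ 2.
Proof. by rewrite divC_N Im_rmul mulrC. Qed.

Lemma reduce (g s : C) : g != 0 ->
  exists k : int, N (s - k%:~R * g) <= N g / 2%:R + `|Im (g^*%C * s)| / N g.
Proof.
move=> gnz; set q := s / g.
set k := Num.floor (Re q + 2%:R^-1); exists k.
have ng0 : 0 < N g by apply: N_gt0.
have e : s - k%:~R * g = g * (q - k%:~R) by rewrite /q; field.
rewrite e NM.
have h1 : N (q - k%:~R) <= `|Re q - k%:~R| + `|Im q|.
  by apply: le_trans (N_le _) _; rewrite ReB ImB Re_int Im_int subr0.
have h2 : `|Re q - k%:~R| <= 2%:R^-1.
  have l1 := floor_le (Re q + 2%:R^-1).
  have l2 := floorD1_gt (Re q + 2%:R^-1).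
  rewrite -/k intrD in l1 l2.
  rewrite ler_norml; apply/andP; split; lra.
have h3 : `|Im q| = `|Im (g^*%C * s)| / N g ^+ 2.
  rewrite /q Im_div normrM normrV ?unitfE ?expf_neq0 ?lt0r_neq0 // [`|N g ^+ 2|]ger0_norm //.
  exact: exprn_ge0 (N_ge0 g).
have h4 : N (q - k%:~R) <= 2%:R^-1 + `|Im (g^*%C * s)| / N g ^+ 2.
  by apply: le_trans h1 _; rewrite -h3 lerD2r.
apply: le_trans (ler_wpM2l (N_ge0 g) h4) _.
rewrite le_eqVlt; apply/orP; left; apply/eqP; field.
by rewrite lt0r_neq0.
Qed.

Lemma dich (H : R -> Prop) : H 0 -> (forall x y, H x -> H y -> H (x - y)) ->
  (forall (k : int) x, H x -> H (k%:~R * x)) ->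
  (forall e, 0 < e -> exists h, [/\ H h, 0 < h & h < e]) \/
  (exists m, 0 < m /\ forall h, H h -> exists k : int, h = k%:~R * m).
Proof.
move=> H0 HB HZ.
case: (pselect (exists h, H h /\ 0 < h)) => [[h0 [Hh0 h0pos]] | none]; last first.
  right; exists 1; split => // h Hh; exists 0; rewrite mul0r.
  have [hn|hp|//] := ltrgtP h 0; exfalso; apply: none.
    by exists (0 - h); split; [exact: HB | lra].
  by exists h.
pose S := fun x => H x /\ 0 < x.
have Sne : nonempty S by exists h0.
have lbS : lbound S 0 by move=> x [_ /ltW].
have hlb : has_lbound S by exists 0.
have m0 : 0 <= inf S by apply: lb_le_inf.
have ginf : forall x, S x -> inf S <= x by move=> x Sx; apply: ge_inf.
move: m0; rewrite le_eqVlt => /orP[/eqP m0|mpos].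
  left => e e0.
  have [y [Hy y0] ye] : exists2 y, S y & y < e by apply: inf_lt => //; rewrite -m0.
  by exists y.
right; exists (inf S); split => //.
have Hm : H (inf S).
  case: (pselect (H (inf S))) => // nHm; exfalso.
  have [h1 Sh1 h1lt] : exists2 y, S y & y < inf S + inf S by apply: inf_lt => //; lra.
  have mh1 := ginf _ Sh1.
  have mlt : inf S < h1.
    rewrite lt_def mh1 andbT; apply/eqP => e; apply: nHm; rewrite -e; exact: Sh1.1.
  have [h2 Sh2 h2lt] : exists2 y, S y & y < h1 by apply: inf_lt.
  have mh2 := ginf _ Sh2.
  have Sd : S (h1 - h2) by split; [apply: HB; [exact: Sh1.1|exact: Sh2.1] | lra].
  have := ginf _ Sd; lra.
move=> h Hh; set m := inf S in mpos Hm ginf *.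
set k := Num.floor (h / m); exists k.
have l1 := floor_le (h / m); have l2 := floorD1_gt (h / m).
rewrite -/k intrD in l1 l2.
have r0 : 0 <= h - k%:~R * m.
  by rewrite subr_ge0 -ler_pdivlMr.
have r1' : h < (k%:~R + 1) * m by rewrite -ltr_pdivrMr.
have r1 : h - k%:~R * m < m by rewrite mulrDl mul1r in r1'; lra.
have Hr : H (h - k%:~R * m) by apply: HB => //; apply: HZ.
move: r0; rewrite le_eqVlt => /orP[/eqP r0|rpos].
  by apply/eqP; rewrite -subr_eq0 -r0.
by have := ginf _ (conj Hr rpos); lra.
Qed.


Section Kron.
Variable G : C -> Prop.
Hypothesis G0 : G 0.
Hypothesis GB : forall x y, G x -> G y -> G (x - y).
Hypothesis GZ : forall (k : int) x, G x -> G (k%:~R * x).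
Hypothesis NI : forall (b : C) (m : R), b != 0 -> 0 < m ->
  ~ (forall g, G g -> exists k : int, Im (b * g) = k%:~R * m).

Lemma dense1 b : b != 0 -> forall r e, 0 < e -> exists g, G g /\ `|Im (b * g) - r| < e.
Proof.
move=> bnz r e e0.
pose H := fun h => exists g, G g /\ h = Im (b * g).
have H0 : H 0 by exists 0; rewrite mulr0.
have HB : forall x y, H x -> H y -> H (x - y).
  move=> _ _ [g [Gg ->]] [g' [Gg' ->]]; exists (g - g'); split; first exact: GB.
  by rewrite mulrBr ImB.
have HZ : forall (k : int) x, H x -> H (k%:~R * x).
  move=> k _ [g [Gg ->]]; exists (k%:~R * g); split; first exact: GZ.
  by rewrite mulrCA Im_zmul.
case: (@dich H H0 HB HZ) => [small | [m [m0 hm]]]; last first.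
  exfalso; apply: (NI b m bnz m0) => g Gg; apply: hm; by exists g.
have [_ [[g0 [Gg0 ->]] h0 he]] := small e e0.
set h := Im (b * g0) in h0 he *.
set k := Num.floor (r / h).
exists (k%:~R * g0); split; first exact: GZ.
rewrite mulrCA Im_zmul -/h.
have l1 := floor_le (r / h); have l2 := floorD1_gt (r / h).
rewrite -/k intrD in l1 l2.
have a1 : k%:~R * h <= r by rewrite -ler_pdivlMr.
have a2 : r < (k%:~R + 1) * h by rewrite -ltr_pdivrMr.
rewrite mulrDl mul1r in a2.
rewrite ltr_norml; apply/andP; split; lra.
Qed.

Lemma exists_nz : exists g, G g /\ g != 0.
Proof.
case: (pselect (exists g, G g /\ g != 0)) => // none; exfalso.
apply: (@NI 1 1) => //; first by rewrite oner_eq0.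
move=> g Gg; exists 0; rewrite mul0r mul1r.
case: (eqVneq g 0) => [->|gnz]; first by rewrite Im_real.
by exfalso; apply: none; exists g.
Qed.

Lemma small e : 0 < e -> exists g, [/\ G g, g != 0 & N g < e].
Proof.
move=> e0.
case: (pselect (exists g, [/\ G g, g != 0 & N g < e])) => // none; exfalso.
have lbe : forall g, G g -> g != 0 -> e <= N g.
  move=> g Gg gnz; rewrite leNgt; apply/negP => lt; apply: none; by exists g.
pose T := fun r => exists g, [/\ G g, g != 0 & r = N g].
have [g0 [Gg0 g0nz]] := exists_nz.
have Tne : nonempty T by exists (N g0), g0.
have hlb : has_lbound T by exists 0 => _ [g [_ _ ->]]; apply: N_ge0.
have emu : e <= inf T by apply: lb_le_inf => // _ [g [Gg gnz ->]]; apply: lbe.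
set mu := inf T in emu.
have mupos : 0 < mu by exact: (lt_le_trans e0 emu).
have [_ [g1 [Gg1 g1nz ->]] g1lt] : exists2 y, T y & y < mu + mu / 2%:R.
  by apply: inf_lt => //; rewrite /mu; lra.
have mug1 : mu <= N g1 by apply: ge_inf => //; exists g1.
have ng1 : 0 < N g1 by apply: N_gt0.
set eta := mu * N g1 / 4%:R.
have eta0 : 0 < eta by rewrite /eta; apply: divr_gt0 => //; apply: mulr_gt0.
have [h [Gh hh]] := @dense1 (g1^*%C) ltac:(by rewrite conjc_eq0) (eta / 2%:R) (eta / 2%:R) ltac:(lra).
set bb := Im (g1^*%C * h) in hh.
have bb0 : 0 < bb.
  by move: hh; rewrite ltr_norml => /andP[l _]; lra.
have bbeta : bb < eta.
  by move: hh; rewrite ltr_norml => /andP[_ l]; lra.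
have [k hk] := reduce g1 h g1nz.
rewrite -/bb (ger0_norm (ltW bb0)) in hk.
have hkb : bb / N g1 < mu / 4%:R.
  by rewrite ltr_pdivrMr // mulrAC.
have Gh' : G (h - k%:~R * g1) by apply: GB => //; apply: GZ.
have h'nz : h - k%:~R * g1 != 0.
  apply/eqP => e1.
  have : Im (g1^*%C * (h - k%:~R * g1)) = bb.
    by rewrite mulrBr ImB mulrCA Im_zmul Im_conj_self mulr0 subr0.
  by rewrite e1 mulr0 Im_real => eb; rewrite -eb in bb0; rewrite ltxx in bb0.
have := ge_inf hlb (ex_intro _ _ (And3 Gh' h'nz erefl)).
rewrite -/mu => hmu.
lra.
Qed.

Lemma kron p e : 0 < e -> exists g, G g /\ N (g - p) < e.
Proof.
move=> e0.
have [g1 [Gg1 g1nz g1e]] := @small (e / 2%:R) ltac:(lra).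
have ng1 : 0 < N g1 by apply: N_gt0.
have [h [Gh hh]] := @dense1 (g1^*%C) ltac:(by rewrite conjc_eq0) (Im (g1^*%C * p)) (e * N g1 / 2%:R)
   ltac:(by apply: divr_gt0 => //; apply: mulr_gt0).
have [k hk] := reduce g1 (h - p) g1nz.
rewrite mulrBr ImB in hk.
exists (h - k%:~R * g1); split; first by apply: GB => //; apply: GZ.
have -> : h - k%:~R * g1 - p = h - p - k%:~R * g1 by ring.
apply: le_lt_trans hk _.
have : `|Im (g1^*%C * h) - Im (g1^*%C * p)| / N g1 < e / 2%:R.
  by rewrite ltr_pdivrMr // mulrAC.
lra.
Qed.
End Kron.

End CHelp.
Arguments N {R}.

Section Bil.
Variable R : realType.
Local Notation C := R[i].
Variable n : nat.
Implicit Types (x y z : 'rV[C]_23) (c : C).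
Local Notation GC := (map_mx (fun k : int => (k%:~R : C)) (k3n_gram n)).

Lemma bilCDl x y z : bilC n (x + y) z = bilC n x z + bilC n y z.
Proof. by rewrite /bilC !mulmxDl mxE. Qed.
Lemma bilCZl c x z : bilC n (c *: x) z = c * bilC n x z.
Proof. by rewrite /bilC -!scalemxAl mxE. Qed.
Lemma bilCDr x y z : bilC n x (y + z) = bilC n x y + bilC n x z.
Proof. by rewrite /bilC linearD /= mulmxDr mxE. Qed.
Lemma bilCZr c x z : bilC n x (c *: z) = c * bilC n x z.
Proof. by rewrite /bilC linearZ /= -scalemxAr mxE. Qed.
Lemma bilCNl x z : bilC n (- x) z = - bilC n x z.
Proof. by rewrite -scaleN1r bilCZl mulN1r. Qed.
Lemma bilCBl x y z : bilC n (x - y) z = bilC n x z - bilC n y z.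
Proof. by rewrite bilCDl bilCNl. Qed.
Lemma bilCNr x z : bilC n x (- z) = - bilC n x z.
Proof. by rewrite -scaleN1r bilCZr mulN1r. Qed.
Lemma bilCBr x y z : bilC n x (y - z) = bilC n x y - bilC n x z.
Proof. by rewrite bilCDr bilCNr. Qed.
Lemma bilC0r x : bilC n x 0 = 0.
Proof. by rewrite /bilC trmx0 mulmx0 mxE. Qed.

Lemma GC_sym : GC^T = GC.
Proof. by rewrite map_trmx gram_sym. Qed.

Lemma mx11_tr (T : Type) (M : 'M[T]_1) : M^T = M.
Proof. by apply/matrixP => i j; rewrite mxE !ord1. Qed.

Lemma bilC_sym x y : bilC n x y = bilC n y x.
Proof.
rewrite /bilC -[x *m GC *m y^T]mx11_tr.
by rewrite !trmx_mul trmxK GC_sym mulmxA.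
Qed.

Lemma conj_int (k : int) : ((k%:~R : C)^*)%C = k%:~R.
Proof. by rewrite intC conjc_real. Qed.

Lemma conjv_toC (v : 'rV[int]_23) : conjv (toC R v) = toC R v.
Proof. by apply/matrixP => i j; rewrite !mxE conj_int. Qed.

Lemma conj_GC : map_mx (@conjc R) GC = GC.
Proof. by apply/matrixP => i j; rewrite !mxE conj_int. Qed.

Lemma bilC_conj x y : bilC n (conjv x) (conjv y) = ((bilC n x y)^*)%C.
Proof.
rewrite /bilC /conjv -[in LHS]conj_GC map_trmx -!map_mxM.
by rewrite mxE.
Qed.

Lemma bil_toC (u v : 'rV[int]_23) : bilC n (toC R u) (toC R v) = (bil n u v)%:~R.
Proof. by rewrite /bilC /bil /toC map_trmx -!map_mxM mxE. Qed.

Lemma toCD (u v : 'rV[int]_23) : toC R (u + v) = toC R u + toC R v.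
Proof. by rewrite /toC map_mxD. Qed.
Lemma toCB (u v : 'rV[int]_23) : toC R (u - v) = toC R u - toC R v.
Proof. by rewrite /toC map_mxB. Qed.
Lemma toCZ (k : int) (u : 'rV[int]_23) : toC R (k *: u) = (k%:~R : C) *: toC R u.
Proof. by apply/matrixP => i j; rewrite !mxE intrM. Qed.
Lemma toC_inj : injective (toC R).
Proof.
move=> u v e; apply/matrixP => i j; move/matrixP: e => /(_ i j); rewrite !mxE.
by move/eqP; rewrite eqr_int => /eqP.
Qed.
Lemma toC0 : toC R (0 : 'rV[int]_23) = 0 :> 'rV[C]_23.
Proof. by rewrite /toC map_mx0. Qed.

End Bil.
Arguments N_ge0 {R}.
Arguments N_gt0 {R}.
Arguments ND {R}.


Lemma prim_mult (a v : 'rV[int]_23) (i : 'I_23) : primitive a -> a 0 i != 0 ->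
  (forall j, a 0 i * v 0 j = v 0 i * a 0 j) -> exists k : int, v = k *: a.
Proof.
move=> [_ hp] ai hrel.
have ai' : ((a 0 i)%:~R : rat) != 0 by rewrite intr_eq0.
set c : rat := (v 0 i)%:~R / (a 0 i)%:~R.
have hj j : ((v 0 j)%:~R : rat) = c * (a 0 j)%:~R.
  have := congr1 (fun k : int => (k%:~R : rat)) (hrel j); rewrite /= !intrM => e.
  by rewrite /c; apply: (mulfI ai'); rewrite e; field.
set P := numq c; set Q := denq c.
have hPQ j : Q * v 0 j = P * a 0 j.
  apply/eqP; rewrite -(eqr_int rat) !intrM hj /P numqE; apply/eqP; ring.
have cop : coprimez P Q by rewrite coprimezE coprime_num_den.
have [[x y] /= hxy] := coprimezP P Q cop.
have aQ : a = Q *: (x *: v + y *: a).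
  apply/matrixP => k j; rewrite !ord1 !mxE.
  have e1 : a 0 j = a 0 j * (x * P + y * Q) by rewrite hxy mulr1.
  rewrite {1}e1.
  have e2 : a 0 j * (x * P + y * Q) = x * (P * a 0 j) + y * Q * a 0 j by ring.
  by rewrite e2 -hPQ; ring.
have Q1 : Q = 1.
  have := hp _ _ aQ; rewrite gtr0_norm //; exact: denq_gt0.
exists P; apply/matrixP => k j; rewrite !ord1 !mxE.
by rewrite -hPQ Q1 mul1r.
Qed.

Section Main.
Variable R : realType.
Local Notation C := R[i].
Variables (n : nat) (a : 'rV[int]_23) (t : 'rV[C]_23).
Hypothesis hn : (2 <= n)%N.
Hypothesis ha_prim : primitive a.
Hypothesis ha_iso : bil n a a = 0.
Hypothesis ht : Q_period_lift n a t.

Local Notation tC := (toC R).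
Definition sv (z : 'rV[int]_23) : C := bilC n t (tC z).
Definition Gdense := forall (p : C) (e : R), 0 < e ->
  exists z, bil n z a = 0 /\ N (sv z - p) < e.

Lemma ta : bilC n t (tC a) = 0.
Proof. by case: ht. Qed.

Lemma az z : bil n z a = 0 -> bilC n (tC a) (tC z) = 0.
Proof. by move=> h; rewrite bilC_sym bil_toC h. Qed.

Lemma gact_fiber (u c : C) z : bil n z a = 0 ->
  gact n a z (u *: t + c *: tC a) = u *: t + (c + u * sv z) *: tC a.
Proof.
move=> hz; rewrite /gact bilCDl !bilCZl az // mulr0 addr0 -/(sv z).
by rewrite scalerDl addrA.
Qed.

Lemma eps_real (eps : C) : 0 < eps -> eps = (Re eps)%:C /\ 0 < Re eps.
Proof.
rewrite ltcE => /andP[/eqP hi hr]; split => //.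
by case: eps hi {hr} => x y /= ->.
Qed.

Lemma sumA_ge (i : 'I_23) : N (((a 0 i)%:~R : C)) <= \sum_(j < 23) N (((a 0 j)%:~R : C)).
Proof.
rewrite (bigD1 i) //= lerDl; apply: sumr_ge0 => j _; exact: N_ge0.
Qed.

Lemma dense_orbit : Gdense -> forall x, in_fiber a t x -> orbit_dense_in_fiber n a t x.
Proof.
move=> GD x [u [c [unz ->]]] y [u' [c' [u'nz ->]]] eps /eps_real [-> E0].
set E := Re eps in E0 *.
set A := \sum_(j < 23) N (((a 0 j)%:~R : C)).
have A0 : 0 <= A by apply: sumr_ge0 => j _; exact: N_ge0.
set K := N u' * A.
have K0 : 0 <= K by apply: mulr_ge0 => //; exact: N_ge0.
set d := E / (K + 1).
have d0 : 0 < d by apply: divr_gt0 => //; lra.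
have [z [hz hzd]] := GD (c' / u' - c / u) d d0.
exists z, (u' / u); split => //; split; first by rewrite mulf_neq0 ?invr_eq0.
move=> i; rewrite gact_fiber // !mxE.
have -> : u' / u * (u * t 0 i + (c + u * sv z) * ((a 0 i)%:~R : C)) - (u' * t 0 i + c' * ((a 0 i)%:~R : C))
   = u' * (sv z - (c' / u' - c / u)) * ((a 0 i)%:~R : C) by field; apply/andP.
rewrite normE ltcR !NM.
have h1 : N u' * N (sv z - (c' / u' - c / u)) * N (((a 0 i)%:~R : C)) <= N u' * d * A.
  apply: ler_pM; [|exact: N_ge0|apply: ler_pM|exact: sumA_ge].
  - by apply: mulr_ge0; apply: N_ge0.
  - exact: N_ge0.
  - exact: N_ge0.
  - by [].
  - exact: ltW.
apply: le_lt_trans h1 _.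
have K1 : K + 1 != 0 by rewrite lt0r_neq0 //; lra.
have -> : N u' * d * A = E * (K / (K + 1)) by rewrite /d /K; field.
rewrite gtr_pMr // ltr_pdivrMr; lra.
Qed.


Lemma a_nz_coord : exists i, a 0 i != 0.
Proof.
case: (pselect (exists i, a 0 i != 0)) => // none; exfalso.
case: ha_prim => /eqP anz _; apply: anz; apply/matrixP => k j; rewrite !ord1 !mxE.
by apply/eqP; apply: contraT => h; case: none; exists j.
Qed.

Lemma conj_sv z : bilC n (conjv t) (tC z) = ((sv z)^*)%C.
Proof. by rewrite -bilC_conj conjv_toC. Qed.

Lemma Nconj (w : C) : N (w^*)%C = N w.
Proof. by apply: complexI; rewrite -!normE normcJ. Qed.

Lemma N_int (k : int) : N ((k%:~R : C)) = `|k%:~R : R|.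
Proof. by rewrite intC N_real. Qed.

Lemma conj_rmul (r : R) (w : C) : ((r%:C * w)^*)%C = r%:C * (w^*)%C.
Proof. by case: w => x y; apply/eqP; rewrite eq_complex /= !mul0r !subr0 !addr0 mulrN !eqxx. Qed.

Lemma dense_nspecial : Gdense -> ~ special n a t.
Proof.
move=> GD [v [u0 [w0 [c0 [hva hvnot hv]]]]].
pose F (s : C) := u0 * s + w0 * (s^*)%C.
have hF z : bil n z a = 0 -> F (sv z) = (bil n v z)%:~R.
  move=> hz; rewrite -bil_toC hv !bilCDl !bilCZl az // conj_sv /F /sv; ring.
case: (pselect (u0 = 0 /\ w0 = 0)) => [[hu hw] | hne].
  have [i ai] := a_nz_coord.
  rewrite hu hw !scale0r !add0r in hv.
  have hvj j : ((v 0 j)%:~R : C) = c0 * (a 0 j)%:~R.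
    by move/matrixP: (hv) => /(_ 0 j); rewrite !mxE.
  have hrel : forall j, a 0 i * v 0 j = v 0 i * a 0 j.
    by move=> j; apply/eqP; rewrite -(eqr_int C) !intrM !hvj; apply/eqP; ring.
  have [k hk] := @prim_mult a v i ha_prim ai hrel.
  by move: (hvnot k); rewrite hk eqxx.
have [s0 hs0] : exists s0, F s0 != 0.
  pose iC : C := Complex 0 1.
  case: (eqVneq (F 1) 0) => h1; last by exists 1.
  case: (eqVneq (F iC) 0) => hi; last by exists iC.
  exfalso; apply: hne; move: h1 hi; rewrite /F conjc1 !mulr1.
  have -> : (iC^*)%C = - iC by apply/eqP; rewrite eq_complex /= oppr0 !eqxx.
  move=> h1 hi.
  have inz : iC != 0 by apply/eqP => /eqP; rewrite eq_complex /= oner_eq0 andbF.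
  have : iC * (u0 - w0) = 0.
    by rewrite -[RHS]hi; ring.
  move/eqP; rewrite mulf_eq0 (negbTE inz) /= subr_eq0 => /eqP e.
  rewrite e in h1 *; move/eqP: h1; rewrite -mulr2n mulrn_eq0 /= => /eqP ->; by split.
set f0 := F s0.
have nf0 : 0 < N f0 by apply: N_gt0.
set r : R := (2%:R * N f0)^-1.
have r0 : 0 < r by rewrite /r invr_gt0; lra.
set s1 := r%:C * s0.
have Fs1 : F s1 = r%:C * f0.
  by rewrite /s1 /f0 /F conj_rmul; ring.
have NFs1 : N (F s1) = 2%:R^-1.
  have nz : N f0 != 0 by rewrite lt0r_neq0.
  rewrite Fs1 NM N_real ger0_norm ?ltW // /r; field.
  by rewrite nz.
set L := N u0 + N w0 + 1.
have L0 : 0 < L by rewrite /L; have := N_ge0 u0; have := N_ge0 w0; lra.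
have [z [hz hzd]] := GD s1 (4%:R * L)^-1 ltac:(rewrite invr_gt0; lra).
set dl := sv z - s1 in hzd.
have hdiff : F (sv z) - F s1 = u0 * dl + w0 * (dl^*)%C.
  by rewrite /F /dl rmorphB; ring.
have Nd : N (F (sv z) - F s1) < 4%:R^-1.
  rewrite hdiff; apply: le_lt_trans (ND _ _) _; rewrite !NM Nconj.
  have hdl : N dl * (4%:R * L) < 1 by rewrite -ltr_pdivlMr //; lra.
  have := N_ge0 dl; have := N_ge0 u0; have := N_ge0 w0.
  rewrite /L in hdl *; nra.
move: Nd; rewrite hF //; set k := bil n v z => Nd.
have tri : N (k%:~R : C) <= N ((k%:~R : C) - F s1) + N (F s1).
  by apply: le_trans (ND _ _); rewrite subrK.
rewrite NFs1 in tri.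
case: (eqVneq k 0) => [k0|knz].
  by move: Nd; rewrite k0 sub0r NN NFs1; lra.
have : 1 <= N (k%:~R : C) by rewrite N_int -intr_norm ler1z -gtz0_ge1 normr_gt0.
lra.
Qed.

Lemma conjv_scale (r : C) (X : 'rV[C]_23) : conjv (r *: X) = (r^*)%C *: conjv X.
Proof. by apply/matrixP => k l; rewrite !mxE rmorphM. Qed.

Lemma NBle (x y : C) : N (x - y) <= N x + N y.
Proof. by apply: le_trans (ND _ _) _; rewrite NN. Qed.

Lemma orbit_Gdense x : in_fiber a t x -> orbit_dense_in_fiber n a t x -> Gdense.
Proof.
move=> [u [c [unz ->]]] hd p e e0.
have [i [j hD]] : exists i j, t 0 i * (a 0 j)%:~R - t 0 j * (a 0 i)%:~R != 0 :> C.
  case: (pselect (exists i j, t 0 i * (a 0 j)%:~R - t 0 j * (a 0 i)%:~R != 0 :> C)) => // none.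
  exfalso.
  have [j aj] := a_nz_coord.
  have ajC : ((a 0 j)%:~R : C) != 0 by rewrite intr_eq0.
  have ht' : t = (t 0 j / (a 0 j)%:~R) *: tC a.
    apply/matrixP => k i; rewrite !ord1 !mxE.
    have : t 0 i * (a 0 j)%:~R - t 0 j * (a 0 i)%:~R = 0 :> C.
      by apply/eqP; apply: contraT => h; case: none; exists i, j.
    move/eqP; rewrite subr_eq0 => /eqP h.
    by apply: (mulIf ajC); rewrite h; field.
  case: ht => _ _; rewrite ht' conjv_scale conjv_toC bilCZl bilCZr bil_toC ha_iso.
  by rewrite !mulr0 ltxx.
set Ti := t 0 i; set Tj := t 0 j.
set Ai : C := (a 0 i)%:~R; set Aj : C := (a 0 j)%:~R.
set D := Ti * Aj - Tj * Ai in hD.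
have ND0 : 0 < N D by apply: N_gt0.
set P := c / u + p.
set K1 := (N Ai + N Aj) / N D.
set K2 := (N Ti + N Tj) / N D.
have K10 : 0 <= K1 by apply: divr_ge0; [apply: addr_ge0; apply: N_ge0 | apply: N_ge0].
have K20 : 0 <= K2 by apply: divr_ge0; [apply: addr_ge0; apply: N_ge0 | apply: N_ge0].
set Kt := K1 + K2 + N P * K1.
have Kt0 : 0 <= Kt by rewrite /Kt; have := N_ge0 P; nra.
set m := e / (2%:R * (1 + e)).
have m0 : 0 < m by rewrite /m; apply: divr_gt0 => //; lra.
have e1nz : 1 + e != 0 by rewrite lt0r_neq0 //; lra.
have Kt1nz : Kt + 1 != 0 by rewrite lt0r_neq0 //; lra.
have m1 : m < 2%:R^-1.
  have -> : m = 2%:R^-1 * (e / (1 + e)) by rewrite /m; field.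
  by rewrite gtr_pMr ?invr_gt0 // ltr_pdivrMr; lra.
have m2 : m < e / 2%:R.
  have -> : m = e / 2%:R / (1 + e) by rewrite /m; field.
  rewrite ltr_pdivrMr; last lra.
  by rewrite mulrDr mulr1 ltrDl; apply: mulr_gt0 => //; lra.
set ep := m / (Kt + 1).
have ep0 : 0 < ep by apply: divr_gt0 => //; lra.
have epKt : ep * Kt < m.
  have -> : ep * Kt = m - ep by rewrite /ep; field.
  lra.
have fib : in_fiber a t (1 *: t + P *: tC a) by exists 1, P; rewrite oner_eq0.
have [z [lam [hz [lamnz hb]]]] := hd _ fib ep%:C ltac:(by rewrite ltcR).
exists z; split => //.
rewrite gact_fiber // in hb.
set A := lam * u; set B := lam * (c + u * sv z).
have hX k : (lam *: (u *: t + (c + u * sv z) *: tC a)) 0 k - (1 *: t + P *: tC a) 0 k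
    = (A - 1) * t 0 k + (B - P) * (a 0 k)%:~R :> C.
  by rewrite !mxE /A /B; ring.
have bi := hb i; have bj := hb j.
rewrite hX normE ltcR -/Ti -/Ai in bi.
rewrite hX normE ltcR -/Tj -/Aj in bj.
set ei := (A - 1) * Ti + (B - P) * Ai in bi.
set ej := (A - 1) * Tj + (B - P) * Aj in bj.
have e1 : (A - 1) * D = ei * Aj - ej * Ai by rewrite /ei /ej /D; ring.
have e2 : (B - P) * D = Ti * ej - Tj * ei by rewrite /ei /ej /D; ring.
have nA1 : N (A - 1) <= ep * K1.
  rewrite /K1 mulrA ler_pdivlMr // -NM e1.
  apply: le_trans (NBle _ _) _; rewrite !NM.
  have := N_ge0 Ai; have := N_ge0 Aj; have := N_ge0 ei; have := N_ge0 ej; nra.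
have nBP : N (B - P) <= ep * K2.
  rewrite /K2 mulrA ler_pdivlMr // -NM e2.
  apply: le_trans (NBle _ _) _; rewrite !NM.
  have := N_ge0 Ti; have := N_ge0 Tj; have := N_ge0 ei; have := N_ge0 ej; nra.
have nA : 2%:R^-1 < N A.
  have : N (1 : C) <= N (1 - A) + N A by apply: le_trans (ND _ _); rewrite subrK.
  rewrite NB N_real normr1.
  have : ep * K1 <= ep * Kt by apply: ler_wpM2l; [lra | rewrite /Kt; have := N_ge0 P; nra].
  lra.
have Anz : A != 0 by rewrite -N_eq0; apply/negP => /eqP h; rewrite h in nA; lra.
have lamu : lam * u != 0 by rewrite mulf_neq0.
have es : sv z - p = ((B - P) - P * (A - 1)) / A.
  by rewrite /A /B /P; field; rewrite unz lamnz.
have h3 : N (sv z - p) * N A < m.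
  have nAinv : N (A^-1) * N A = 1 by rewrite -NM mulVf // N_real normr1.
  rewrite es NM -mulrA nAinv mulr1.
  apply: le_lt_trans (NBle _ _) _; rewrite NM.
  have : N P * N (A - 1) <= N P * (ep * K1) by apply: ler_wpM2l => //; apply: N_ge0.
  have : ep * K2 + N P * (ep * K1) = ep * (Kt - K1) by rewrite /Kt; ring.
  have : ep * K1 >= 0 by apply: mulr_ge0; lra.
  lra.
have := N_ge0 (sv z - p); nra.
Qed.

Lemma bil_sym x y : bil n x y = bil n y x.
Proof. by apply/eqP; rewrite -(eqr_int C) -!(@bil_toC R) [X in X == _]bilC_sym. Qed.
Lemma bilBl x y w : bil n (x - y) w = bil n x w - bil n y w.
Proof. by rewrite /bil !mulmxBl !mxE. Qed.
Lemma bilZl (k : int) x w : bil n (k *: x) w = k * bil n x w.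
Proof. by rewrite /bil -!scalemxAl mxE. Qed.
Lemma bil0l w : bil n 0 w = 0.
Proof. by rewrite /bil !mul0mx mxE. Qed.

Lemma GC_rowfree : row_free (map_mx (fun k : int => (k%:~R : C)) (k3n_gram n)).
Proof.
rewrite row_free_unit unitmxE unitfE det_map_mx intr_eq0.
exact: det_gram_neq0.
Qed.

Lemma b_nz : exists i0, (a *m k3n_gram n) 0 i0 != 0.
Proof.
case: (pselect (exists i0, (a *m k3n_gram n) 0 i0 != 0)) => // none; exfalso.
case: ha_prim => /eqP anz _; apply: anz.
have h : map_mx (fun k : int => (k%:~R : R)) a *m GF R n = 0.
  have hb : a *m k3n_gram n = 0.
    apply/matrixP => k j; rewrite !ord1 [RHS]mxE.
    by apply/eqP; apply: contraT => h; case: none; exists j.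
  by rewrite /GF -map_mxM hb map_mx0.
have /matrixP h2 := @GF_inj R n hn _ h; apply/matrixP => k j; move: (h2 k j); rewrite !mxE.
by move/eqP; rewrite intr_eq0 => /eqP.
Qed.

Lemma sum_delta (T : comNzRingType) (f : 'I_23 -> T) (c : T) (j : 'I_23) :
  \sum_l f l * (c * (l == j)%:R) = c * f j.
Proof.
rewrite (bigD1 j) //= eqxx mulr1 big1 ?addr0 ?[f j * c]mulrC // => l /negbTE ->.
by rewrite mulr0 mulr0.
Qed.

Lemma realC_div (x y : R) : (x / y)%:C = x%:C / y%:C :> C.
Proof. by rewrite fmorph_div. Qed.
Lemma conjM (x y : C) : ((x * y)^*)%C = (x^*)%C * (y^*)%C.
Proof. by rewrite rmorphM. Qed.

Lemma ImJ' (x : C) : (Im x)%:C = ((x^*)%C - x) / 2%:R * (Complex 0 1) :> C.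
Proof. exact: ImJ_sub. Qed.

Lemma toC_mul (x : 'rV[int]_23) (M : 'M[int]_23) :
  tC (x *m M) = tC x *m map_mx (fun k : int => (k%:~R : C)) M.
Proof. by rewrite /toC map_mxM. Qed.

Lemma intr_b (T : pzRingType) (b : bool) : ((b%:R : int)%:~R : T) = b%:R.
Proof. by case: b. Qed.

Lemma conjvK (X : 'rV[C]_23) : conjv (conjv X) = X.
Proof. by apply/matrixP => k l; rewrite !mxE conjcK. Qed.

Lemma nspecial_Gdense : ~ special n a t -> Gdense.
Proof.
move=> ns p e e0.
pose G := fun s : C => exists z, bil n z a = 0 /\ s = sv z.
have G0 : G 0 by exists 0; rewrite bil0l /sv toC0 bilC0r.
have GB : forall x y, G x -> G y -> G (x - y).
  move=> _ _ [z [hz ->]] [z' [hz' ->]]; exists (z - z'); split.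
    by rewrite bilBl hz hz' subr0.
  by rewrite /sv toCB bilCBr.
have GZ : forall (k : int) x, G x -> G (k%:~R * x).
  move=> k _ [z [hz ->]]; exists (k *: z); split; first by rewrite bilZl hz mulr0.
  by rewrite /sv toCZ bilCZr.
have NI : forall (b : C) (m : R), b != 0 -> 0 < m ->
    ~ (forall g, G g -> exists k : int, Im (b * g) = k%:~R * m).
  move=> b m bnz m0 H; apply: ns.
  pose iC : C := Complex 0 1.
  have iCnz : iC != 0 by apply/eqP => /eqP; rewrite eq_complex /= oner_eq0 andbF.
  have mCnz : m%:C != 0 by apply/eqP; case => h; move: m0; rewrite h ltxx.
  have two : (2%:R : C) != 0 by rewrite pnatr_eq0.
  pose u := - (b * iC) / (2%:R * m%:C).
  pose w := ((b^*)%C * iC) / (2%:R * m%:C).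
  have hF (s : C) : ((Im (b * s) / m)%:C) = u * s + w * (s^*)%C :> C.
    rewrite realC_div ImJ' conjM /u /w /iC; move: (b^*)%C (s^*)%C => bc sc; field.
    by rewrite ?two ?mCnz.
  pose y := u *: t + w *: conjv t.
  have hy z : bil n z a = 0 -> exists k : int, bilC n y (tC z) = k%:~R.
    move=> hz; have [k hk] := H (sv z) (ex_intro _ z (conj hz erefl)).
    exists k; rewrite /y bilCDl !bilCZl conj_sv -/(sv z) -hF hk mulfK ?lt0r_neq0 //.
    by rewrite intC.
  pose GC := map_mx (fun k : int => (k%:~R : C)) (k3n_gram n).
  have [om omE] : exists om, om = y *m GC by eexists.
  have [bv bvE] : exists bv, bv = a *m k3n_gram n by eexists.
  have [i0 bi0] := b_nz; rewrite -bvE in bi0.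
  pose bi := bv 0 i0.
  pose zj (j : 'I_23) : 'rV[int]_23 := \row_l (bi * (l == j)%:R - bv 0 j * (l == i0)%:R).
  have hzj j : bil n (zj j) a = 0.
    rewrite bil_sym /bil -bvE mxE /zj.
    under eq_bigr => l _ do rewrite !mxE mulrBr.
    rewrite sumrB !sum_delta /bi.
    by rewrite mulrC subrr.
  have hom j : bilC n y (tC (zj j)) = bi%:~R * om 0 j - (bv 0 j)%:~R * om 0 i0.
    rewrite /bilC -/GC -omE mxE /zj.
    under eq_bigr => l _ do rewrite !mxE intrB !intrM !intr_b mulrBr.
    by rewrite sumrB !sum_delta.
  pose kv : 'rV[int]_23 := \row_j Num.floor (Re (bi%:~R * om 0 j - (bv 0 j)%:~R * om 0 i0)).
  have hkv : tC kv = bi%:~R *: om - (om 0 i0) *: tC bv.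
    apply/matrixP => k j; rewrite !ord1 !mxE.
    have [kk hkk] := hy _ (hzj j).
    rewrite hom in hkk; rewrite hkk Re_int intrKfloor -hkk.
    by rewrite [om 0 i0 * _]mulrC.
  pose D := \det (k3n_gram n).
  pose v := kv *m \adj (k3n_gram n).
  have hvG : tC v *m GC = ((D * bi)%:~R *: y - ((D%:~R) * om 0 i0) *: tC a) *m GC.
    rewrite /GC -toC_mul /v -mulmxA mul_adj_mx mul_mx_scalar toCZ hkv.
    rewrite omE bvE toC_mul mulmxBl -!scalemxAl scalerBr !scalerA intrM.
    by [].
  have hv : tC v = (D * bi)%:~R *: y - ((D%:~R) * om 0 i0) *: tC a.
    exact: (row_free_inj GC_rowfree hvG).
  exists v, ((D * bi)%:~R * u), ((D * bi)%:~R * w), (- ((D%:~R) * om 0 i0)).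
  split.
  - apply/eqP; rewrite -(eqr_int C) -bil_toC hv bilCBl !bilCZl /y bilCDl !bilCZl ta.
    by rewrite conj_sv /sv ta conjc0 bil_toC ha_iso !mulr0 addr0 mulr0 subrr.
  - move=> k; apply/eqP => hk; rewrite hk toCZ in hv.
    have := congr1 (fun X => bilC n (conjv t) X) hv.
    rewrite /= bilCZr bilCBr !bilCZr /y bilCDr !bilCZr conj_sv /sv ta conjc0 !mulr0 subr0.
    have e1 := @bilC_conj R n t (conjv t); rewrite conjvK in e1.
    have e2 : bilC n (conjv t) (conjv t) = 0.
      by rewrite bilC_conj; case: ht => _ -> _; rewrite conjc0.
    case: ht => _ _ tpos.
    rewrite e1 e2 mulr0 addr0 => /esym/eqP.
    have Dbnz : ((D * bi)%:~R : C) != 0.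
      by rewrite intr_eq0 mulf_neq0 // det_gram_neq0.
    have cnz : ((bilC n t (conjv t))^*)%C != 0.
      by rewrite conjc_eq0 lt0r_neq0.
    rewrite !mulf_eq0 (negbTE Dbnz) (negbTE cnz) /= orbF /u.
    rewrite oppr_eq0 invr_eq0 !mulf_eq0.
    by rewrite (negbTE bnz) (negbTE iCnz) (negbTE two) (negbTE mCnz).
  - by rewrite hv /y scalerDr !scalerA scaleNr.
have [g [[z [hz ->]] hg]] := @kron R G G0 GB GZ NI p e e0.
by exists z.
Qed.

Lemma main_sec :
  ((exists x : 'rV[C]_23, in_fiber a t x /\ orbit_dense_in_fiber n a t x)
     <-> ~ special n a t)
  /\
  ((exists x : 'rV[C]_23, in_fiber a t x /\ orbit_dense_in_fiber n a t x) ->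
     forall x : 'rV[C]_23, in_fiber a t x -> orbit_dense_in_fiber n a t x).
Proof.
split; first split.
- move=> [x [hx hd]]; apply: dense_nspecial; exact: (orbit_Gdense x hx hd).
- move=> ns; exists t; split.
    by exists 1, 0; rewrite oner_eq0 scale1r scale0r addr0.
  apply: (dense_orbit (nspecial_Gdense ns) t).
  by exists 1, 0; rewrite oner_eq0 scale1r scale0r addr0.
- move=> [x [hx hd]] y hy; exact: (dense_orbit (orbit_Gdense x hx hd) y hy).
Qed.

End Main.

Local Close Scope complex_scope.

Theorem lemma5p4 (R : realType) (n : nat) (hn : (2 <= n)%N) (a : 'rV[int]_23)
    (ha_prim : primitive a) (ha_iso : bil n a a = 0)
    (t : 'rV[R[i]]_23) (ht : Q_period_lift n a t) :
  ((exists x : 'rV[R[i]]_23, in_fiber a t x /\ orbit_dense_in_fiber n a t x)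
     <-> ~ special n a t)
  /\
  ((exists x : 'rV[R[i]]_23, in_fiber a t x /\ orbit_dense_in_fiber n a t x) ->
     forall x : 'rV[R[i]]_23, in_fiber a t x -> orbit_dense_in_fiber n a t x).
Proof. exact: (@main_sec R n a t hn ha_prim ha_iso ht). Qed.
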